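(* Consider ${\sf BubbleRank}$ (defined below) run with parameter $\delta\in(0,1)$ in a stochastic click bandit satisfying A1–A5 with $\alpha(1)>\dots>\alpha(K)>0$. For $t\in[n]$ let $$\mathbf{P}_t=\{(i,j)\in[K]^2: i<j,\ |\bar{\mathbf{R}}_t^{-1}(i)-\bar{\mathbf{R}}_t^{-1}(j)|=1,\ \mathbf{s}_{t-1}(i,j)\le2\sqrt{\mathbf{n}_{t-1}(i,j)\log(1/\delta)}\}$$ and let $\mathbf{\Delta}_t$ be the maximum of the attraction gap $\Delta(\mathcal{R})$ over all lists $\mathcal{R}$ that ${\sf BubbleRank}$ may display at time $t$ (over its randomization). Then on the event $\mathcal{E}$ defined below, for every $t\in[n]$, $$\mathbf{\Delta}_t\le3\sum_{i=1}^K\sum_{j=i+1}^K\mathbb{1}\{(i,j)\in\mathbf{P}_t\}(\alpha(i)-\alpha(j)).$$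
   Context: Model. Items $[K]$; a list $\mathcal{R}$ orders all $K$ items, $\mathcal{R}(k)$ is the item at position $k$, $\mathcal{R}^{-1}(i)$ the position of $i$; $\Pi_K$ the set of lists. At time $t$, $(\mathbf{A}_t,\mathbf{X}_t)\in\{0,1\}^K\times\{0,1\}^{\Pi_K\times[K]}$ is drawn i.i.d. from a product distribution; the learner displays $\mathbf{R}_t$ and observes $\mathbf{c}_t(k)=\mathbf{X}_t(\mathbf{R}_t,k)\mathbf{A}_t(\mathbf{R}_t(k))$. $\alpha=\mathbb{E}[\mathbf{A}_t]$, $\chi=\mathbb{E}[\mathbf{X}_t]$, $r(\mathcal{R},\alpha,\chi)=\sum_k\chi(\mathcal{R},k)\alpha(\mathcal{R}(k))$, $\mathcal{R}^*=(1,\dots,K)$. Assumptions for all lists $\mathcal{R},\mathcal{R}'$ and positions $k<\ell$: (A1) $r(\mathcal{R},\alpha,\chi)\le r(\mathcal{R}^*,\alpha,\chi)$; (A2) $\{\mathcal{R}(1..k-1)\}=\{\mathcal{R}'(1..k-1)\}\Rightarrow\chi(\mathcal{R},k)=\chi(\mathcal{R}',k)$; (A3) $\chi(\mathcal{R},k)\ge\chi(\mathcal{R},\ell)$; (A4) if $\mathcal{R},\mathcal{R}'$ differ only by exchanging items at positions $k,\ell$, then $\alpha(\mathcal{R}(k))\le\alpha(\mathcal{R}(\ell))\iff\chi(\mathcal{R},\ell)\ge\chi(\mathcal{R}',\ell)$; (A5) $\chi(\mathcal{R},k)\ge\chi(\mathcal{R}^*,k)$. Attraction gap: $\Delta(\mathcal{R})=\sum_{k=1}^{K-1}\max\{\alpha(\mathcal{R}(k+1))-\alpha(\mathcal{R}(k)),0\}$.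 Algorithm ${\sf BubbleRank}$ (initial list $\mathcal{R}_0$, horizon $n$): $\mathbf{s}_0\equiv\mathbf{n}_0\equiv0$, $\bar{\mathbf{R}}_1=\mathcal{R}_0$. For $t=1,\dots,n$: $h=t\bmod2$, $\mathbf{R}_t\leftarrow\bar{\mathbf{R}}_t$; for $k=1,\dots,\lfloor(K-h)/2\rfloor$ with $i=\mathbf{R}_t(2k-1+h)$, $j=\mathbf{R}_t(2k+h)$: if $\mathbf{s}_{t-1}(i,j)\le2\sqrt{\mathbf{n}_{t-1}(i,j)\log(1/\delta)}$ exchange these two positions with probability $1/2$. Display $\mathbf{R}_t$, observe $\mathbf{c}_t$. $\mathbf{s}_t=\mathbf{s}_{t-1}$, $\mathbf{n}_t=\mathbf{n}_{t-1}$; for each such $k$ with $i=\mathbf{R}_t(2k-1+h)$, $j=\mathbf{R}_t(2k+h)$: if $|\mathbf{c}_t(2k-1+h)-\mathbf{c}_t(2k+h)|=1$, add $\mathbf{c}_t(2k-1+h)-\mathbf{c}_t(2k+h)$ to $\mathbf{s}_t(i,j)$, its negative to $\mathbf{s}_t(j,i)$, and $1$ to $\mathbf{n}_t(i,j),\mathbf{n}_t(j,i)$. Then $\bar{\mathbf{R}}_{t+1}=\bar{\mathbf{R}}_t$; for $k=1,\dots,K-1$ in order with $i=\bar{\mathbf{R}}_{t+1}(k)$, $j=\bar{\mathbf{R}}_{t+1}(k+1)$: if $\mathbf{s}_t(j,i)>2\sqrt{\mathbf{n}_t(j,i)\log(1/\delta)}$ exchange positions $k,k+1$ of $\bar{\mathbf{R}}_{t+1}$.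 Event $\mathcal{E}=\bigcap_{t\in[n]}(\mathcal{E}_{t,1}\cap\mathcal{E}_{t,2})$, where $\mathcal{E}_{t,1}$: for all $i<j$, $\frac{\alpha(i)-\alpha(j)}{\alpha(i)+\alpha(j)}\mathbf{n}_t(i,j)-2\sqrt{\mathbf{n}_t(i,j)\log(1/\delta)}\le\mathbf{s}_t(i,j)$; and $\mathcal{E}_{t,2}$: for all $i>j$, $\mathbf{s}_t(i,j)\le2\sqrt{\mathbf{n}_t(i,j)\log(1/\delta)}$. *)

(* Defs.v *)
From HB Require Import structures.
From mathcomp Require Import all_boot all_order all_algebra all_fingroup.
From mathcomp Require Import reals exp.
Set Implicit Arguments. Unset Strict Implicit. Unset Printing Implicit Defensive.
Import Order.TTheory GRing.Theory Num.Theory.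
Local Open Scope ring_scope.

(* Items are 'I_K (item i+1 of the paper = ordinal i); positions are 'I_K
   (position k+1 of the paper = ordinal k). A list is a permutation
   L : {perm 'I_K}, L k = item at position k, L^-1 i = position of item i. *)

Section BubbleRank.
Variable R : realType.
Variable K : nat.

Definition Aspace := {ffun 'I_K -> bool}.
Definition Xspace := {ffun ({perm 'I_K} * 'I_K) -> bool}.

Definition is_distr (T : finType) (p : T -> R) :=
  (forall t, 0 <= p t) /\ \sum_(t : T) p t = 1.

Definition alpha_of (pA : Aspace -> R) (i : 'I_K) : R :=
  \sum_(a : Aspace) pA a * (a i)%:R.
Definition chi_of (pX : Xspace -> R) (L : {perm 'I_K}) (k : 'I_K) : R :=
  \sum_(x : Xspace) pX x * (x (L, k))%:R.

Definition reward (alpha : 'I_K -> R) (chi : {perm 'I_K} -> 'I_K -> R)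
  (L : {perm 'I_K}) : R := \sum_(k : 'I_K) chi L k * alpha (L k).

Definition Rstar : {perm 'I_K} := 1%g.

(* list obtained by exchanging the items at positions p and q *)
Definition swap (L : {perm 'I_K}) (p q : 'I_K) : {perm 'I_K} := (tperm p q * L)%g.

Definition prefix_items (L : {perm 'I_K}) (k : 'I_K) : {set 'I_K} :=
  [set L j | j : 'I_K & (j < k)%N].

Definition A1 (alpha : 'I_K -> R) (chi : {perm 'I_K} -> 'I_K -> R) := forall L : {perm 'I_K}, reward alpha chi L <= reward alpha chi Rstar.
Definition A2 (chi : {perm 'I_K} -> 'I_K -> R) := forall (L L' : {perm 'I_K}) (k : 'I_K),
  prefix_items L k = prefix_items L' k -> chi L k = chi L' k.
Definition A3 (chi : {perm 'I_K} -> 'I_K -> R) := forall (L : {perm 'I_K}) (k l : 'I_K),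
  (k < l)%N -> chi L l <= chi L k.
Definition A4 (alpha : 'I_K -> R) (chi : {perm 'I_K} -> 'I_K -> R) :=
  forall (L : {perm 'I_K}) (k l : 'I_K), (k < l)%N ->
  (alpha (L k) <= alpha (L l) <-> chi (swap L k l) l <= chi L l).
Definition A5 (chi : {perm 'I_K} -> 'I_K -> R) := forall (L : {perm 'I_K}) (k : 'I_K), chi Rstar k <= chi L k.

Definition nxt (k : 'I_K) : 'I_K := insubd k k.+1.
Definition attraction_gap (alpha : 'I_K -> R) (L : {perm 'I_K}) : R :=
  \sum_(k : 'I_K | (k.+1 < K)%N) Num.max (alpha (L (nxt k)) - alpha (L k)) 0.

Definition thr (delta : R) (m : nat) : R := 2 * Num.sqrt (m%:R * ln (delta^-1)).

Record state := State {
  rbar : {perm 'I_K};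
  sst : 'I_K -> 'I_K -> int;
  nst : 'I_K -> 'I_K -> nat }.

Definition init_state (R0 : {perm 'I_K}) : state :=
  State R0 (fun _ _ => 0%R) (fun _ _ => 0%N).

Definition uncertain (delta : R) (s : 'I_K -> 'I_K -> int)
  (n : 'I_K -> 'I_K -> nat) (i j : 'I_K) : bool :=
  (s i j)%:~R <= thr delta (n i j).

(* positions 2k-1+h (paper, 1-indexed), k = 1..floor((K-h)/2):
   0-indexed positions p with p = h mod 2 and p+1 < K *)
Definition active (h : nat) (k : 'I_K) : bool := ((k %% 2 == h) && (k.+1 < K))%N.

Definition display (delta : R) (Rb : {perm 'I_K}) (s : 'I_K -> 'I_K -> int)
  (n : 'I_K -> 'I_K -> nat) (h : nat) (bt : {ffun 'I_K -> bool}) : {perm 'I_K} :=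
  foldl (fun (L : {perm 'I_K}) (k : 'I_K) =>
    if active h k && uncertain delta s n (L k) (L (nxt k)) && bt k
    then swap L k (nxt k) else L) Rb (enum 'I_K).

Definition upd_stats (h : nat) (L : {perm 'I_K}) (c : 'I_K -> int)
  (sn : ('I_K -> 'I_K -> int) * ('I_K -> 'I_K -> nat)) :=
  foldl (fun sn (k : 'I_K) =>
    let: (s, n) := sn in
    if active h k && (`|c k - c (nxt k)| == 1)
    then let i := L k in let j := L (nxt k) in let d := c k - c (nxt k) in
      ((fun u v => if (u == i) && (v == j) then s u v + d
                   else if (u == j) && (v == i) then s u v - d else s u v),
       (fun u v => if ((u == i) && (v == j)) || ((u == j) && (v == i))
                   then (n u v).+1 else n u v))
    else (s, n)) sn (enum 'I_K).

Definition upd_rbar (delta : R) (s : 'I_K -> 'I_K -> int) (n : 'I_K -> 'I_K -> nat)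
  (Rb : {perm 'I_K}) : {perm 'I_K} :=
  foldl (fun (L : {perm 'I_K}) (k : 'I_K) =>
    if (k.+1 < K)%N && (thr delta (n (L (nxt k)) (L k)) < (s (L (nxt k)) (L k))%:~R)
    then swap L k (nxt k) else L) Rb (enum 'I_K).

Definition step (delta : R) (t : nat) (st : state) (bt : {ffun 'I_K -> bool})
  (a : Aspace) (x : Xspace) : state :=
  let h := (t %% 2)%N in
  let L := display delta (rbar st) (sst st) (nst st) h bt in
  let c := fun k : 'I_K => ((x (L, k) && a (L k)) : nat)%:Z in
  let sn := upd_stats h L c (sst st, nst st) in
  State (upd_rbar delta sn.1 sn.2 (rbar st)) sn.1 sn.2.

(* traj t = (\bar R_{t+1}, s_t, n_t) *)
Fixpoint traj (delta : R) (R0 : {perm 'I_K}) (coins : nat -> {ffun 'I_K -> bool})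
  (as_ : nat -> Aspace) (xs : nat -> Xspace) (t : nat) : state :=
  match t with
  | 0 => init_state R0
  | t'.+1 => step delta t'.+1 (traj delta R0 coins as_ xs t') (coins t'.+1)
               (as_ t'.+1) (xs t'.+1)
  end.

Definition E1 (delta : R) (alpha : 'I_K -> R) (st : state) :=
  forall i j : 'I_K, (i < j)%N ->
    (alpha i - alpha j) / (alpha i + alpha j) * (nst st i j)%:R
      - thr delta (nst st i j) <= (sst st i j)%:~R.
Definition E2 (delta : R) (st : state) :=
  forall i j : 'I_K, (j < i)%N -> (sst st i j)%:~R <= thr delta (nst st i j).

(* P_t, with st = traj (t-1) = (\bar R_t, s_{t-1}, n_{t-1}) *)
Definition inP (delta : R) (st : state) (i j : 'I_K) : bool :=
  [&& (i < j)%N,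
      (`| ((perm_inv (rbar st) i : nat)%:Z - (perm_inv (rbar st) j : nat)%:Z) |%N == 1)%N
    & uncertain delta (sst st) (nst st) i j].

Definition Delta_t (delta : R) (alpha : 'I_K -> R) (t : nat) (st : state) : R :=
  \big[Num.max/0]_(bt : {ffun 'I_K -> bool})
     attraction_gap alpha (display delta (rbar st) (sst st) (nst st) (t %% 2)%N bt).

End BubbleRank.

(* Main.v *)
Require Import Defs.
From HB Require Import structures.
From mathcomp Require Import all_boot all_order all_algebra all_fingroup.
From mathcomp Require Import reals exp zify lra.
Import Order.TTheory GRing.Theory Num.Theory.
Local Open Scope ring_scope.

Set Implicit Arguments. Unset Strict Implicit. Unset Printing Implicit Defensive.

Definition prv (K : nat) (k : 'I_K) : 'I_K := insubd k k.-1.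
Definition tau (K : nat) (sw : 'I_K -> bool) (k : 'I_K) : 'I_K :=
  if sw k then nxt k else if (0 < k)%N && sw (prv k) then prv k else k.
Definition taum (K : nat) (sw : 'I_K -> bool) (m : nat) (k : 'I_K) : 'I_K :=
  if sw k && (k < m)%N then nxt k
  else if [&& (0 < k)%N, sw (prv k) & (prv k < m)%N] then prv k else k.
Definition cur (K : nat) (sw : 'I_K -> bool) (k : 'I_K) : 'I_K :=
  if (0 < k)%N && sw (prv k) then prv k else k.

Lemma val_nxt K (k : 'I_K) : (k.+1 < K)%N -> nat_of_ord (nxt k) = k.+1.
Proof. by move=> h; rewrite /nxt val_insubd h. Qed.
Lemma val_nxt' K (k : 'I_K) : ~~ (k.+1 < K)%N -> nxt k = k.
Proof. by move=> h; apply: val_inj; rewrite /nxt val_insubd (negbTE h). Qed.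
Lemma val_prv K (k : 'I_K) : nat_of_ord (prv k) = k.-1.
Proof. rewrite /prv val_insubd; case: ifP => //; have := ltn_ord k; lia. Qed.

Lemma active_lt K h (k : 'I_K) : active h k -> (k.+1 < K)%N.
Proof. by case/andP. Qed.
Lemma active_par K h (a b : 'I_K) : active h a -> active h b -> nat_of_ord b <> (nat_of_ord a).+1.
Proof. rewrite /active => /andP[/eqP ha _] /andP[/eqP hb _]; lia. Qed.

Lemma taum_S K sw m (x : 'I_K) : taum sw m.+1 x =
  if sw x && (x == m :> nat) then nxt x
  else if [&& (0 < x)%N, sw (prv x) & (x.-1 == m)] then prv x else taum sw m x.
Proof. rewrite /taum val_prv; do ![case: ifP => //=]; lia. Qed.

Lemma fold_sw K h (sw : 'I_K -> bool) (c : {perm 'I_K} -> 'I_K -> bool) (L0 : {perm 'I_K}) :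
 (forall k, sw k -> active h k) ->
 (forall (L : {perm 'I_K}) (k : 'I_K), ~~ (k.+1 < K)%N -> c L k = false) ->
 (forall (L : {perm 'I_K}) (k : 'I_K), (k.+1 < K)%N -> L k = L0 (cur sw k) -> L (nxt k) = L0 (nxt k) -> c L k = sw k) ->
 forall x, foldl (fun L k => if c L k then swap L k (nxt k) else L) L0 (enum 'I_K) x
   = L0 (tau sw x).
Proof.
move=> Hsw Hc0 Hc.
have Hsw1 : forall a b : 'I_K, sw a -> sw b -> nat_of_ord b <> (nat_of_ord a).+1.
  by move=> a b /Hsw ha /Hsw hb; apply: active_par ha hb.
suff H : forall m, (m <= K)%N -> forall x,
   foldl (fun L k => if c L k then swap L k (nxt k) else L) L0 (take m (enum 'I_K)) x
   = L0 (taum sw m x).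
  move=> x; have := H K (leqnn K) x; rewrite take_oversize ?size_enum_ord // => ->.
  congr (L0 _); rewrite /taum /tau ltn_ord val_prv.
  have := ltn_ord x; case: (sw x) => //=; case: (0 < x)%N => //=; case: (sw _) => //= _.
  by rewrite ifT //; have := ltn_ord x; lia.
elim=> [|m IH] HmK x.
  by rewrite take0 /= /taum /= !andbF.
have Hm : (m < K)%N by [].
rewrite (take_nth (Ordinal Hm)) ?size_enum_ord // foldl_rcons.
set k := nth _ _ m.
have vk : nat_of_ord k = m by rewrite /k nth_enum_ord.
set L := foldl _ L0 _.
have HL := IH (ltnW HmK).
rewrite -/L in HL.
have Hk : L k = L0 (cur sw k).
  rewrite HL /taum /cur vk ltnn andbF val_prv vk.
  case: (ltnP 0 m) => m0 //=; case: (sw _) => //=.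
  by rewrite ifT //; lia.
have ek : forall y : 'I_K, nat_of_ord y = m -> y = k.
  by move=> y ym; apply: val_inj; rewrite /= ym vk.
case Hlast: (k.+1 < K)%N; last first.
  have swk : sw k = false by apply/negP => /Hsw /active_lt; rewrite Hlast.
  rewrite Hc0 ?Hlast // HL taum_S.
  case: ifP => [/andP[sx /eqP /ek xk]|_]; first by rewrite xk swk in sx.
  case: ifP => [/and3P[_ sp /eqP pm]|_] //.
  have pk : prv x = k by apply: ek; rewrite val_prv pm.
  by rewrite pk swk in sp.
have Hnk : L (nxt k) = L0 (nxt k).
  rewrite HL /taum val_nxt // vk ltnNge leqnSn andbF /=.
  have -> : prv (nxt k) = k by apply: val_inj => /=; rewrite val_prv val_nxt.
  by rewrite vk ltnn !andbF.
rewrite (Hc _ _ Hlast Hk Hnk).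
have Hnk' : nat_of_ord (nxt k) = m.+1 by rewrite val_nxt // vk.
have pnk : prv (nxt k) = k by apply: val_inj => /=; rewrite val_prv Hnk'.
case swk: (sw k).
  rewrite /swap permM.
  case: (tpermP k (nxt k) x) => [->|->|xk xnk].
  - by rewrite Hnk taum_S swk vk eqxx.
  - rewrite Hk /cur taum_S pnk swk Hnk' /= eqxx.
    have -> : sw (nxt k) = false by apply/negP => /(Hsw1 _ _ swk); rewrite Hnk' vk.
    case: (ltnP 0 k) => k0 //=.
    case Hp: (sw (prv k)) => //=.
    by have := Hsw1 _ _ Hp swk; rewrite val_prv; lia.
  - rewrite HL taum_S.
    case: ifP => [/andP[sx /eqP /ek xk']|_]; first by rewrite xk' in xk.
    case: ifP => [/and3P[x0 sp /eqP pm]|_] //.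
    have : x = nxt k by apply: val_inj; rewrite /= Hnk'; lia.
    by move=> E; exfalso; apply: xnk.
rewrite HL taum_S.
case: ifP => [/andP[sx /eqP /ek xk]|_]; first by rewrite xk swk in sx.
case: ifP => [/and3P[_ sp /eqP pm]|_] //.
have pk : prv x = k by apply: ek; rewrite val_prv pm.
by rewrite pk swk in sp.
Qed.

Lemma tau_val K h (sw : 'I_K -> bool) (x : 'I_K) : (forall k, sw k -> active h k) ->
  nat_of_ord (tau sw x) = if sw x then x.+1 else if (0 < x)%N && sw (prv x) then x.-1 else x.
Proof.
move=> Hsw; rewrite /tau; case Hx: (sw x); first by rewrite val_nxt // (active_lt (Hsw _ Hx)).
by case: ifP => //; rewrite val_prv.
Qed.

Lemma tau_inv K h (sw : 'I_K -> bool) (x : 'I_K) : (forall k, sw k -> active h k) ->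
  tau sw (tau sw x) = x.
Proof.
move=> Hsw.
have Hp : forall a b : 'I_K, sw a -> sw b -> nat_of_ord b <> (nat_of_ord a).+1.
  by move=> a b /Hsw ha /Hsw hb; apply: active_par ha hb.
case Hx: (sw x).
  have Hx1 := active_lt (Hsw _ Hx).
  have tx : tau sw x = nxt x by rewrite /tau Hx.
  have sn : sw (nxt x) = false.
    by apply/negbTE/negP => H; have := Hp _ _ Hx H; rewrite val_nxt.
  have pn : prv (nxt x) = x by apply: val_inj => /=; rewrite val_prv val_nxt.
  by rewrite tx /tau sn pn Hx val_nxt.
case H0: ((0 < x)%N && sw (prv x)).
  case/andP: H0 => x0 spx.
  have -> : tau sw x = prv x by rewrite /tau Hx x0 spx.
  have Hpx1 : ((prv x).+1 < K)%N by rewrite val_prv; have := ltn_ord x; lia.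
  rewrite /tau spx; apply: val_inj => /=; rewrite val_nxt // val_prv; lia.
have -> : tau sw x = x by rewrite /tau Hx H0.
by rewrite /tau Hx H0.
Qed.

Lemma tau_inj K h (sw : 'I_K -> bool) : (forall k, sw k -> active h k) -> injective (tau sw).
Proof. by move=> Hsw; apply: (can_inj (g := tau sw)) => x; apply: tau_inv Hsw. Qed.

Lemma tau_mono K h (sw : 'I_K -> bool) (p q : 'I_K) : (forall k, sw k -> active h k) ->
  (p < q)%N -> ~~ (sw p && (nat_of_ord q == p.+1)) -> (tau sw p < tau sw q)%N.
Proof.
move=> Hsw pq Hn.
have Hneq : nat_of_ord (tau sw p) != tau sw q.
  apply/negP => /eqP E; have E' := val_inj E; have := tau_inj Hsw E'.
  by move=> epq; move: pq; rewrite epq ltnn.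
move: Hneq.
rewrite (tau_val p Hsw) (tau_val q Hsw).
have Hq : (nat_of_ord q != p.+1) || (sw (prv q) == sw p).
  apply/orP; case: (eqVneq (nat_of_ord q) p.+1) => e; last by left.
  by right; apply/eqP; congr sw; apply: val_inj => /=; rewrite val_prv e.
have q0 : (0 < q)%N := leq_ltn_trans (leq0n p) pq.
rewrite q0 /=; case p0: (0 < p)%N => /=;
move: Hn Hq; case: (sw p); case: (sw q); case: (sw (prv p)); case: (sw (prv q)) => /=; lia.
Qed.

Lemma perm_inv_tau K h (sw : 'I_K -> bool) (L L0 : {perm 'I_K}) :
  (forall k, sw k -> active h k) -> (forall x, L x = L0 (tau sw x)) ->
  forall i, perm_inv L i = tau sw (perm_inv L0 i).
Proof.
move=> Hsw HL i.
have E : forall (s : {perm 'I_K}) x, s (perm_inv s x) = x by move=> s x; exact: (permKV s x).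
by apply: (@perm_inj _ L); rewrite [RHS]HL (tau_inv _ Hsw) !E.
Qed.

Definition antisym K (s : 'I_K -> 'I_K -> int) := forall u v, s u v = - s v u.
Definition symm K (n : 'I_K -> 'I_K -> nat) := forall u v, n u v = n v u.

Lemma upd_stats_anti K h (L : {perm 'I_K}) c sn :
  antisym sn.1 -> symm sn.2 ->
  antisym (upd_stats h L c sn).1 /\ symm (upd_stats h L c sn).2.
Proof.
rewrite /upd_stats; elim: (enum 'I_K) sn => [|k ks IH] [s n] //= Ha Hs.
case: ifP => [/andP[/andP[_ hk] _]|_]; last by apply: IH.
have ij : L k != L (nxt k).
  by rewrite (inj_eq perm_inj); apply/eqP => /(congr1 val) /=; rewrite val_nxt //; lia.
move: ij; set i := L k; set j := L (nxt k); set d := (c k - c (nxt k)) => ij.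
have ji : j != i by rewrite eq_sym.
apply: IH => u v /=.
  case HA: ((u == i) && (v == j)).
    case/andP: HA => /eqP -> /eqP ->.
    by rewrite !eqxx (negbTE ij) (negbTE ji) /= Ha opprB addrC.
  case HB: ((u == j) && (v == i)).
    case/andP: HB => /eqP eu /eqP ev; subst u v.
    by rewrite !eqxx (negbTE ij) (negbTE ji) /=; have := Ha i j; lia.
  rewrite andbC HB.
  by rewrite andbC HA; have := Ha u v; lia.
case HA: ((u == i) && (v == j)); first by case/andP: HA => /eqP -> /eqP ->; rewrite !eqxx orbT /= Hs.
case HB: ((u == j) && (v == i)); first by case/andP: HB => /eqP -> /eqP ->; rewrite !eqxx /= Hs.
by rewrite /= andbC HB andbC HA /= Hs.
Qed.

Definition ChR K h (L : {perm 'I_K}) (u v : 'I_K) : bool :=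
  [exists k, active h k && (((u == L k) && (v == L (nxt k))) || ((u == L (nxt k)) && (v == L k)))].

Lemma upd_stats_unch K h (L : {perm 'I_K}) c sn u v :
  ~~ ChR h L u v ->
  (upd_stats h L c sn).1 u v = sn.1 u v /\ (upd_stats h L c sn).2 u v = sn.2 u v.
Proof.
move/existsPn => Hn; rewrite /upd_stats.
elim: (enum 'I_K) sn => [|k ks IH] [s n] //=.
case: ifP => [/andP[hk _]|_]; last exact: IH.
rewrite (proj1 (IH _)) (proj2 (IH _)) /=.
have := Hn k; rewrite hk /= negb_or => /andP[h1 h2].
by rewrite (negbTE h1) (negbTE h2).
Qed.

Lemma thr_ge0 (R : realType) (delta : R) m : 0 <= thr delta m.
Proof. by rewrite /thr mulr_ge0 ?sqrtr_ge0. Qed.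

Lemma tau_active K h (sw : 'I_K -> bool) (k : 'I_K) :
  (forall k, sw k -> active h k) -> active h k ->
  (sw k -> tau sw k = nxt k /\ tau sw (nxt k) = k) /\
  (~~ sw k -> tau sw k = k /\ tau sw (nxt k) = nxt k).
Proof.
move=> Hsw ak; have hk := active_lt ak.
have snk : sw (nxt k) = false.
  apply/negbTE/negP => /Hsw an; apply: (active_par ak an); by rewrite val_nxt.
have pnk : prv (nxt k) = k by apply: val_inj => /=; rewrite val_prv val_nxt.
have n0 : (0 < nxt k)%N by rewrite val_nxt.
split; move=> swk.
  by rewrite /tau swk snk pnk swk n0.
rewrite /tau (negbTE swk) snk pnk (negbTE swk) andbF; split => //.
case: ifP => // /andP[k0 /Hsw ap]; exfalso; apply: (active_par ap ak).
by rewrite val_prv; lia.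
Qed.

Definition swd (R : realType) K (delta : R) (Rb : {perm 'I_K}) s n h
  (bt : {ffun 'I_K -> bool}) k :=
  active h k && uncertain delta s n (Rb k) (Rb (nxt k)) && bt k.

Lemma swd_act (R : realType) K (delta : R) (Rb : {perm 'I_K}) s n h bt k :
  swd delta Rb s n h bt k -> active h k.
Proof. by case/andP => /andP[]. Qed.

Lemma display_tau (R : realType) K (delta : R) (Rb : {perm 'I_K}) s n h bt x :
  display delta Rb s n h bt x = Rb (tau (swd delta Rb s n h bt) x).
Proof.
rewrite /display.
apply: (fold_sw (h := h) (c := fun L k => active h k && uncertain delta s n (L k) (L (nxt k)) && bt k)).
- by move=> k; apply: swd_act.
- by move=> L k hk; rewrite /active (negbTE hk) andbF.
move=> L k hk; rewrite /cur /swd; case: ifP => [/andP[k0 /andP[/andP[ap _] _]] _ _ | _ -> ->] //.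
have -> : active h k = false.
  apply/negbTE/negP => ak; apply: (active_par ap ak); rewrite val_prv; lia.
by [].
Qed.

Definition INV (R : realType) K (delta : R) (st : state K) :=
  forall i j : 'I_K, thr delta (nst st i j) < (sst st i j)%:~R ->
    (perm_inv (rbar st) i < perm_inv (rbar st) j)%N.

Lemma permKi K (L : {perm 'I_K}) y : perm_inv L (L y) = y.
Proof. exact: (permK L y). Qed.
Lemma permKVi K (L : {perm 'I_K}) y : L (perm_inv L y) = y.
Proof. exact: (permKV L y). Qed.

Lemma step_inv (R : realType) K (delta : R) t (st : state K) bt a x :
  INV delta st -> antisym (sst st) -> symm (nst st) ->
  INV delta (step delta t st bt a x) /\ antisym (sst (step delta t st bt a x))
    /\ symm (nst (step delta t st bt a x)).
Proof.
move=> HI Ha Hs.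
rewrite /step.
set h := (t %% 2)%N.
set Rb := rbar st.
set D := display delta Rb (sst st) (nst st) h bt.
set c := fun k : 'I_K => _.
have HD := display_tau delta Rb (sst st) (nst st) h bt.
rewrite -/D in HD.
have [Ha' Hs'] := @upd_stats_anti K h D c (sst st, nst st) Ha Hs.
set sn := upd_stats h D c (sst st, nst st).
rewrite -/sn in Ha' Hs'.
have HCh : forall u v, ~~ ChR h Rb u v -> sn.1 u v = sst st u v /\ sn.2 u v = nst st u v.
  move=> u v H; apply: upd_stats_unch; apply: contra H => /existsP [k /andP[ak E]].
  apply/existsP; exists k; rewrite ak /=.
  have [H1 H2] := tau_active (fun k => @swd_act R K delta Rb (sst st) (nst st) h bt k) ak.
  move: E; rewrite !HD.
  case sk: (swd delta Rb (sst st) (nst st) h bt k).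
    by have [-> ->] := H1 sk; rewrite orbC.
  by have [-> ->] := H2 (negbT sk).
set swp := fun k : 'I_K => active h k &&
  (thr delta (sn.2 (Rb (nxt k)) (Rb k)) < (sn.1 (Rb (nxt k)) (Rb k))%:~R).
have swp_act : forall k, swp k -> active h k by move=> k /andP[].
have HR : forall y, upd_rbar delta sn.1 sn.2 Rb y = Rb (tau swp y).
  rewrite /upd_rbar.
  apply: (fold_sw (h := h) (c := fun L k => (k.+1 < K)%N &&
     (thr delta (sn.2 (L (nxt k)) (L k)) < (sn.1 (L (nxt k)) (L k))%:~R))).
  - exact: swp_act.
  - by move=> L k hk; rewrite (negbTE hk).
  move=> L k hk; rewrite /cur; case: ifP => [/andP[k0 spk] -> ->|_ -> ->].
    have -> : swp k = false.
      apply/negbTE/negP => /swp_act ak; have ap := swp_act _ spk.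
      by apply: (active_par ap ak); rewrite val_prv; lia.
    rewrite hk /=.
    have nC : ~~ ChR h Rb (Rb (nxt k)) (Rb (prv k)).
      apply/existsPn => k'; apply/negP => /andP[ak' /orP[/andP[/eqP e1 /eqP e2]|/andP[/eqP e1 /eqP e2]]].
        have hk' := active_lt ak'.
        move: (perm_inj e1) (perm_inj e2) => /(congr1 val) /= f1 /(congr1 val) /= f2.
        by move: f1 f2; rewrite val_nxt // val_prv val_nxt //; lia.
      have hk' := active_lt ak'.
      move: (perm_inj e1) (perm_inj e2) => /(congr1 val) /= f1 /(congr1 val) /= f2.
      by move: f1 f2; rewrite val_nxt // val_prv val_nxt //; lia.
    have [-> ->] := HCh _ _ nC.
    apply/negbTE/negP => /HI; rewrite !permKi val_nxt // val_prv; lia.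
  rewrite hk /swp.
  case ak: (active h k) => //=.
  have nC : ~~ ChR h Rb (Rb (nxt k)) (Rb k).
    apply/existsPn => k'; apply/negP => /andP[ak' /orP[/andP[/eqP e1 /eqP e2]|/andP[/eqP e1 /eqP e2]]].
      have hk' := active_lt ak'.
      move: (perm_inj e1) (perm_inj e2) => /(congr1 val) /= f1 /(congr1 val) /= f2.
      by move: f1 f2; rewrite val_nxt // val_nxt //; lia.
    by move: (perm_inj e2) => E; rewrite E ak' in ak.
  have [-> ->] := HCh _ _ nC.
  apply/negbTE/negP => /HI; rewrite !permKi val_nxt //; lia.
have HRinv := perm_inv_tau swp_act HR.
split; last by split.
move=> i j /= Hc.
rewrite !HRinv.
have ei : i = Rb (perm_inv Rb i) by rewrite permKVi.
have ej : j = Rb (perm_inv Rb j) by rewrite permKVi.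
case Hch: (ChR h Rb i j).
  case/existsP: Hch => k /andP[ak /orP[/andP[/eqP ik /eqP jk]|/andP[/eqP ik /eqP jk]]].
    have [H1 H2] := tau_active swp_act ak.
    rewrite ik jk !permKi.
    case swk: (swp k).
      exfalso; move: swk => /andP[_]; rewrite -ik -jk => Hc2.
      have h1 := le_lt_trans (thr_ge0 delta _) Hc.
      have h2 := le_lt_trans (thr_ge0 delta _) Hc2.
      move: h2; rewrite Ha' intrN; lra.
    have [-> ->] := H2 (negbT swk).
    by rewrite val_nxt // (active_lt ak).
  have [H1 H2] := tau_active swp_act ak.
  rewrite ik jk !permKi.
  have swk : swp k by rewrite /swp ak -ik -jk.
  have [-> ->] := H1 swk.
  by rewrite val_nxt // (active_lt ak).
have [E1 E2] := HCh _ _ (negbT Hch).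
rewrite E1 E2 in Hc.
have pq := HI _ _ Hc.
apply: (tau_mono swp_act pq).
apply/negP => /andP[sp /eqP qp].
have ap := swp_act _ sp.
move/negbT: Hch; apply/negP; rewrite negbK.
apply/existsP; exists (perm_inv Rb i); rewrite ap /=.
apply/orP; left; rewrite -ei eqxx /=.
apply/eqP; rewrite {1}ej; congr (Rb _); apply: val_inj => /=.
by rewrite val_nxt ?qp // (active_lt ap).
Qed.

Lemma traj_inv (R : realType) K (delta : R) R0 coins as_ xs t :
  INV delta (@traj R K delta R0 coins as_ xs t) /\ antisym (sst (traj delta R0 coins as_ xs t))
  /\ symm (nst (traj delta R0 coins as_ xs t)).
Proof.
elim: t => [|t [H1 [H2 H3]]] /=.
  split; last by split=> // u v; rewrite oppr0.
  by move=> i j /=; rewrite /thr mul0r sqrtr0 mulr0 ltxx.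
exact: step_inv.
Qed.

Definition Wf (R : realType) K (delta : R) (alpha : 'I_K -> R) (st : state K) (m : nat) : R :=
  \sum_(i : 'I_K) \sum_(j : 'I_K | (i < j)%N)
    ((inP delta st i j) && (m == minn (perm_inv (rbar st) i) (perm_inv (rbar st) j)))%:R
      * (alpha i - alpha j).

Lemma W_ge0 (R : realType) K (delta : R) (alpha : 'I_K -> R) st m :
  (forall i j : 'I_K, (i < j)%N -> alpha j < alpha i) -> 0 <= Wf delta alpha st m.
Proof.
move=> Ha; apply: sumr_ge0 => i _; apply: sumr_ge0 => j ij.
by rewrite mulr_ge0 ?ler0n // subr_ge0 ltW // Ha.
Qed.

Lemma W_single (R : realType) K (delta : R) (alpha : 'I_K -> R) st (i j : 'I_K) m :
  (forall i j : 'I_K, (i < j)%N -> alpha j < alpha i) ->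
  (i < j)%N -> inP delta st i j ->
  m = minn (perm_inv (rbar st) i) (perm_inv (rbar st) j) ->
  alpha i - alpha j <= Wf delta alpha st m.
Proof.
move=> Ha ij hP hm.
have nn : forall i' j' : 'I_K, (i' < j')%N -> 0 <= ((inP delta st i' j') && (m == minn (perm_inv (rbar st) i') (perm_inv (rbar st) j')))%:R
      * (alpha i' - alpha j').
  by move=> i' j' h; rewrite mulr_ge0 ?ler0n // subr_ge0 ltW // Ha.
have hm' : (m == minn (perm_inv (rbar st) i) (perm_inv (rbar st) j)) = true by rewrite hm eqxx.
rewrite /Wf (bigD1 i) //= (bigD1 j) //= hP hm' /= mul1r -addrA lerDl.
apply: addr_ge0.
  by apply: sumr_ge0 => l /andP[h _]; apply: nn.
by apply: sumr_ge0 => k _; apply: sumr_ge0 => l h; apply: nn.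
Qed.

Lemma W_K (R : realType) K (delta : R) (alpha : 'I_K -> R) st m :
  (K <= m)%N -> Wf delta alpha st m = 0.
Proof.
move=> Km; apply: big1 => i _; apply: big1 => j _.
have : (m == minn (perm_inv (rbar st) i) (perm_inv (rbar st) j)) = false.
  apply/negbTE; have := ltn_ord (perm_inv (rbar st) i); have := ltn_ord (perm_inv (rbar st) j); lia.
by move=> ->; rewrite andbF mul0r.
Qed.

Lemma absz1 (a : nat) : (`|(a.+1%:Z - a%:Z)|%N == 1)%N && (`|(a%:Z - a.+1%:Z)|%N == 1)%N.
Proof. by apply/andP; split; apply/eqP; lia. Qed.

Lemma W_adj (R : realType) K (delta : R) (alpha : 'I_K -> R) st (a : 'I_K) :
  (forall i j : 'I_K, (i < j)%N -> alpha j < alpha i) -> INV delta st ->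
  (a.+1 < K)%N ->
  alpha (rbar st (nxt a)) - alpha (rbar st a) <= Wf delta alpha st a.
Proof.
move=> Ha HI ha.
set u := rbar st a; set v := rbar st (nxt a).
have uv : u != v.
  apply/negP => /eqP /perm_inj /(congr1 val) /=; rewrite val_nxt //; lia.
case: (ltngtP u v) => [uv'|vu|e]; last by move: uv; rewrite (val_inj e) eqxx.
  have := Ha _ _ uv'; have := @W_ge0 R K delta alpha st a Ha; lra.
apply: (W_single (i := v) (j := u)) => //.
  rewrite /inP vu /= /u /v !permKi val_nxt // (proj1 (andP (absz1 a))) /=.
  rewrite /uncertain leNgt; apply/negP => /HI; rewrite !permKi val_nxt //; lia.
by rewrite /u /v !permKi val_nxt //; lia.
Qed.

Lemma W_adj_unc (R : realType) K (delta : R) (alpha : 'I_K -> R) st (a : 'I_K) :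
  (forall i j : 'I_K, (i < j)%N -> alpha j < alpha i) ->
  (a.+1 < K)%N -> uncertain delta (sst st) (nst st) (rbar st a) (rbar st (nxt a)) ->
  alpha (rbar st a) - alpha (rbar st (nxt a)) <= Wf delta alpha st a.
Proof.
move=> Ha ha hu.
set u := rbar st a; set v := rbar st (nxt a).
have uv : u != v.
  apply/negP => /eqP /perm_inj /(congr1 val) /=; rewrite val_nxt //; lia.
case: (ltngtP u v) => [uv'|vu|e]; last by move: uv; rewrite (val_inj e) eqxx.
  apply: (W_single (i := u) (j := v)) => //.
    by rewrite /inP uv' /= /u /v !permKi val_nxt // (proj2 (andP (absz1 a))).
  by rewrite /u /v !permKi val_nxt //; lia.
have := Ha _ _ vu; have := @W_ge0 R K delta alpha st a Ha; lra.
Qed.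

Lemma gap_point (R : realType) K (delta : R) (alpha : 'I_K -> R) st h bt (k : 'I_K) :
  (forall i j : 'I_K, (i < j)%N -> alpha j < alpha i) -> INV delta st ->
  (k.+1 < K)%N ->
  alpha (display delta (rbar st) (sst st) (nst st) h bt (nxt k))
    - alpha (display delta (rbar st) (sst st) (nst st) h bt k)
  <= (if (0 < k)%N then Wf delta alpha st k.-1 else 0) + Wf delta alpha st k
     + Wf delta alpha st k.+1.
Proof.
move=> Ha HI hk.
rewrite !display_tau.
set sw := swd delta (rbar st) (sst st) (nst st) h bt.
have swa : forall k, sw k -> active h k by move=> k'; apply: swd_act.
have W0 := fun m => @W_ge0 R K delta alpha st m Ha.
have Wif : 0 <= (if (0 < k)%N then Wf delta alpha st k.-1 else 0) by case: ifP.
have pnk : prv (nxt k) = k by apply: val_inj => /=; rewrite val_prv val_nxt.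
case sk: (sw k).
  have [H1 _] := tau_active swa (swa _ sk); have [-> ->] := H1 sk.
  have hu : uncertain delta (sst st) (nst st) (rbar st k) (rbar st (nxt k)).
    by move: sk; rewrite /sw /swd => /andP[/andP[]].
  have := W_adj_unc Ha hk hu; have := W0 k.+1; lra.
have tn : tau sw (nxt k) = if sw (nxt k) then nxt (nxt k) else nxt k.
  by rewrite /tau; case: (sw (nxt k)) => //; rewrite pnk sk andbF.
have tk : tau sw k = if (0 < k)%N && sw (prv k) then prv k else k by rewrite /tau sk.
have B := W_adj Ha HI hk.
have A : alpha (rbar st (tau sw (nxt k))) - alpha (rbar st (nxt k)) <= Wf delta alpha st k.+1.
  rewrite tn; case snk: (sw (nxt k)); last by rewrite subrr; apply: W0.
  have hnk := active_lt (swa _ snk).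
  by have := W_adj Ha HI hnk; rewrite val_nxt.
have C : alpha (rbar st k) - alpha (rbar st (tau sw k))
    <= (if (0 < k)%N then Wf delta alpha st k.-1 else 0).
  rewrite tk; case: ifP => [/andP[k0 sp]|_]; last by rewrite subrr.
  rewrite k0.
  have hp : ((prv k).+1 < K)%N by rewrite val_prv; have := ltn_ord k; lia.
  have npk : nxt (prv k) = k by apply: val_inj => /=; rewrite val_nxt // val_prv; lia.
  by have := W_adj Ha HI hp; rewrite npk val_prv.
lra.
Qed.

Lemma sum_shift1 (R : realType) (f : nat -> R) K : (forall m, 0 <= f m) ->
  \sum_(k < K) (if (0 < k)%N then f k.-1 else 0) <= \sum_(k < K) f k.
Proof.
case: K => [|K] H; first by rewrite !big_ord0.
rewrite big_ord_recl big_ord_recr /= add0r lerDl; exact: H.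
Qed.

Lemma sum_shift2 (R : realType) (f : nat -> R) K : (forall m, 0 <= f m) -> f K = 0 ->
  \sum_(k < K) f k.+1 <= \sum_(k < K) f k.
Proof.
case: K => [|K] H HK; first by rewrite !big_ord0.
by rewrite big_ord_recr big_ord_recl /= HK addr0 addrC lerDl.
Qed.

Lemma W_sum (R : realType) K (delta : R) (alpha : 'I_K -> R) st :
  \sum_(k < K) Wf delta alpha st k =
  \sum_(i : 'I_K) \sum_(j : 'I_K | (i < j)%N) (inP delta st i j)%:R * (alpha i - alpha j).
Proof.
rewrite /Wf exchange_big; apply: eq_bigr => i _.
rewrite exchange_big; apply: eq_bigr => j _ /=.
set c := minn _ _.
have hc : (c < K)%N by rewrite /c gtn_min ltn_ord.
rewrite (bigD1 (Ordinal hc)) //= eqxx andbT big1 ?addr0 // => k hk.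
have : (nat_of_ord k == c) = false.
  by apply/negbTE; apply: contra hk => /eqP e; apply/eqP; apply: val_inj.
by move=> ->; rewrite andbF mul0r.
Qed.

Lemma gap_bound (R : realType) K (delta : R) (alpha : 'I_K -> R) st h bt :
  (forall i j : 'I_K, (i < j)%N -> alpha j < alpha i) -> INV delta st ->
  attraction_gap alpha (display delta (rbar st) (sst st) (nst st) h bt)
  <= 3 * \sum_(k < K) Wf delta alpha st k.
Proof.
move=> Ha HI.
have W0 := fun m => @W_ge0 R K delta alpha st m Ha.
set T := fun k : 'I_K => (if (0 < k)%N then Wf delta alpha st k.-1 else 0) + Wf delta alpha st k
     + Wf delta alpha st k.+1.
have T0 : forall k, 0 <= T k.
  move=> k; rewrite /T; have := W0 k; have := W0 k.+1.
  by case: ifP => _; have := W0 k.-1; lra.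
apply: (@le_trans _ _ (\sum_(k : 'I_K | (k.+1 < K)%N) T k)).
  apply: ler_sum => k hk; rewrite ge_max T0 andbT.
  exact: gap_point.
apply: (@le_trans _ _ (\sum_(k : 'I_K) T k)).
  rewrite [X in _ <= X](bigID (fun k : 'I_K => (k.+1 < K)%N)) /= lerDl.
  by apply: sumr_ge0.
rewrite /T !big_split /=.
have S1 := @sum_shift1 R (Wf delta alpha st) K W0.
have S3 := @sum_shift2 R (Wf delta alpha st) K W0 (@W_K R K delta alpha st K (leqnn K)).
lra.
Qed.

Lemma Delta_bound (R : realType) K (delta : R) (alpha : 'I_K -> R) st t :
  (forall i j : 'I_K, (i < j)%N -> alpha j < alpha i) -> INV delta st ->
  Delta_t delta alpha t st <=
  3 * \sum_(i : 'I_K) \sum_(j : 'I_K | (i < j)%N) (inP delta st i j)%:R * (alpha i - alpha j).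
Proof.
move=> Ha HI.
rewrite -W_sum /Delta_t.
apply: (big_ind (fun x => x <= 3 * \sum_(k < K) Wf delta alpha st k)).
- by rewrite mulr_ge0 // sumr_ge0 // => k _; apply: W_ge0.
- by move=> x y hx hy; rewrite ge_max hx hy.
by move=> bt _; apply: gap_bound.
Qed.
Unset Implicit Arguments.
Set Strict Implicit.

Theorem lemma3 (R : realType) (K : nat)
  (pA : Aspace K -> R) (pX : Xspace K -> R)
  (delta : R) (n : nat) (R0 : {perm 'I_K})
  (coins : nat -> {ffun 'I_K -> bool}) (as_ : nat -> Aspace K) (xs : nat -> Xspace K) :
  is_distr pA -> is_distr pX ->
  A1 (alpha_of pA) (chi_of pX) -> A2 (chi_of pX) -> A3 (chi_of pX) ->
  A4 (alpha_of pA) (chi_of pX) -> A5 (chi_of pX) ->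
  (forall i j : 'I_K, (i < j)%N -> alpha_of pA j < alpha_of pA i) ->
  (forall i : 'I_K, 0 < alpha_of pA i) ->
  0 < delta < 1 ->
  (* the realized (A_t, X_t) have positive probability under pA (x) pX *)
  (forall t, (1 <= t <= n)%N -> 0 < pA (as_ t) /\ 0 < pX (xs t)) ->
  (* the event E *)
  (forall t, (1 <= t <= n)%N ->
     E1 delta (alpha_of pA) (traj delta R0 coins as_ xs t) /\
     E2 delta (traj delta R0 coins as_ xs t)) ->
  forall t, (1 <= t <= n)%N ->
    Delta_t delta (alpha_of pA) t (traj delta R0 coins as_ xs t.-1) <=
    3 * \sum_(i : 'I_K) \sum_(j : 'I_K | (i < j)%N)
          (inP delta (traj delta R0 coins as_ xs t.-1) i j)%:R
            * (alpha_of pA i - alpha_of pA j).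
Proof.
move=> _ _ _ _ _ _ _ Ha _ _ _ _ t _.
have [HI _] := @traj_inv R K delta R0 coins as_ xs t.-1.
exact: Delta_bound.
Qed.
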